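(* Let $G=(V,E)$ be an undirected graph and let $\mathcal{F}$ be a $(\kappa,t)$-packing of $G$. Then the induced packing graph $H=G_{\mathcal{F}}$ satisfies $$\frac{|E(H)|}{|V(H)|}\le 2(t+1)^2\kappa^2\,\nabla_t(G)+\kappa.$$
   Context: A graph $K$ is $t$-shallow if there is a vertex $h$ such that every vertex of $K$ is joined to $h$ by a path in $K$ with at most $t$ edges. A $(\kappa,t)$-packing of $G$ is a multiset $\mathcal{F}$ of subsets $C\subseteq V$ such that each induced subgraph $G[C]$ is $t$-shallow and every vertex of $V$ lies in at most $\kappa$ members of $\mathcal{F}$ (counted with multiplicity). The induced packing graph $G_{\mathcal{F}}$ has vertex set $\mathcal{F}$, with $C,C'\in\mathcal{F}$ adjacent if $C\cap C'\neq\emptyset$ or there are $u\in C$, $v\in C'$ with $uv\in E$. A $t$-shallow minor of $G$ is a graph obtained by contracting edges and deleting edges and vertices such that each vertex of the minor corresponds to a cluster of vertices of $G$ inducing a $t$-shallow subgraph; $\nabla_t(G)$ is the supremum of $|E(K)|/|V(K)|$ over all $t$-shallow minors $K$ of $G$. *)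

(* Defs.v *)
From mathcomp Require Import all_boot all_order all_algebra.
From mathcomp Require Import boolp.
Set Implicit Arguments. Unset Strict Implicit. Unset Printing Implicit Defensive.
Import Order.TTheory GRing.Theory Num.Theory.
Local Open Scope ring_scope.

(* A path
   h = x_0, x_1, ..., x_n = v is encoded as h followed by the seq p = x_1..x_n. *)
Definition t_shallow (T : finType) (e : rel T) (t : nat) (C : {set T}) : Prop :=
  exists2 h, h \in C &
    forall v, v \in C ->
      exists p : seq T,
        [/\ path (fun x y => [&& e x y, x \in C & y \in C]) h p,
            last h p = v & (size p <= t)%N].

(* (kappa,t)-packing: F is a multiset (a list; repetitions allowed) of
   vertex subsets, each inducing a t-shallow subgraph, and every vertex lies
   in at most kappa members of F (counted with multiplicity). *)
Definition packing (T : finType) (e : rel T) (kappa t : nat) (F : seq {set T}) : Prop :=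
  (forall C, C \in F -> t_shallow e t C) /\
  (forall v : T, (count (fun C : {set T} => v \in C) F <= kappa)%N).

Definition pack_adj (T : finType) (e : rel T) (C C' : {set T}) : bool :=
  [exists u in C, exists v in C', (u == v) || e u v].

(* Vertices of G_F are the indices 'I_(size F) (members of the multiset);
   edges are unordered pairs {i,j}, i <> j, encoded as (i,j) with i < j. *)
Definition packing_graph_edges (T : finType) (e : rel T) (F : seq {set T}) :
  {set 'I_(size F) * 'I_(size F)} :=
  [set p : 'I_(size F) * 'I_(size F) | ((p.1 < p.2)%N) && pack_adj e (nth set0 F p.1) (nth set0 F p.2)].

(* A t-shallow minor K of G with vertex set 'I_k: pairwise disjoint clusters
   B a (a : 'I_k), each inducing a t-shallow subgraph of G (vertices outside
   all clusters are deleted), and an edge set Ek of unordered pairs {a,b},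
   encoded as (a,b) with a < b, such that each edge of K is realised by an
   edge of G between the two clusters (other edges deleted). *)
Definition shallow_minor (T : finType) (e : rel T) (t k : nat)
    (B : {ffun 'I_k -> {set T}}) (Ek : {set 'I_k * 'I_k}) : Prop :=
  [/\ forall a, t_shallow e t (B a),
      forall a b, a != b -> [disjoint B a & B b] &
      forall p, p \in Ek ->
        (p.1 < p.2)%N /\ exists u v, [/\ u \in B p.1, v \in B p.2 & e u v]].

(* Since clusters are disjoint and nonempty, |V(K)| <= |V(G)|, so the sup is
   a finite maximum; 0 is included (harmless: all ratios are >= 0, and it is
   the value when G has no vertices, i.e. no minor exists). *)
Definition nabla (T : finType) (e : rel T) (t : nat) : rat :=
  \big[Num.max/0]_(k < #|T|.+1)
   \big[Num.max/0]_(B : {ffun 'I_k -> {set T}})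
    \big[Num.max/0]_(Ek : {set 'I_k * 'I_k} | `[< shallow_minor e t B Ek >])
      ((#|Ek|)%:R / (k : nat)%:R).

(* Main.v *)
Require Import Defs.
From mathcomp Require Import all_boot all_order all_algebra all_fingroup.
From mathcomp Require Import boolp zify ring.
Import Order.TTheory GRing.Theory Num.Theory.
Set Implicit Arguments. Unset Strict Implicit. Unset Printing Implicit Defensive.


Definition first_in (n : nat) (M : {set 'I_n}) (s : {perm 'I_n}) (x : 'I_n) :=
  (x \in M) && [forall k in M, (k != x) ==> (s x < s k)%N].

Lemma first_in_move n (M : {set 'I_n}) s x y :
  x \in M -> y \in M -> first_in M s x -> first_in M (tperm x y * s)%g y.
Proof.
move=> xM yM /andP[_ /forall_inP H]; rewrite /first_in yM /=.
apply/forall_inP => k kM; apply/implyP => nky.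
rewrite !permM tpermR.
case: tpermP => [E|E|nkx _].
- subst k; apply: (implyP (H y yM)).
  by rewrite eq_sym.
- by move: nky; rewrite E eqxx.
- by apply: (implyP (H k kM)); apply/eqP.
Qed.

Lemma first_in_uniq n (M : {set 'I_n}) s x y :
  first_in M s x -> first_in M s y -> x = y.
Proof.
move=> /andP[xM /forall_inP Hx] /andP[yM /forall_inP Hy].
apply/eqP; apply/negPn/negP => nxy.
have := implyP (Hx y yM); rewrite eq_sym nxy => /(_ isT) l1.
have := implyP (Hy x xM); rewrite nxy => /(_ isT) l2.
by have := ltn_trans l1 l2; rewrite ltnn.
Qed.

Lemma first_in_ex n (M : {set 'I_n}) s x :
  x \in M -> exists2 y, y \in M & first_in M s y.
Proof.
move=> xM; case: (arg_minnP (fun k => s k) xM) => y yM Hy.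
exists y => //; rewrite /first_in; apply/andP; split => //.
apply/forall_inP => k kM; apply/implyP => nky.
rewrite ltn_neqAle Hy // andbT.
by apply/eqP => /val_inj /perm_inj E; rewrite E eqxx in nky.
Qed.

Lemma count_first n (S : {set {perm 'I_n}}) (M : {set 'I_n}) x :
  x \in M ->
  (forall s a b, s \in S -> a \in M -> b \in M -> (tperm a b * s)%g \in S) ->
  (#|[set s in S | first_in M s x]| * #|M| = #|S|)%N.
Proof.
move=> xM Scl.
have cardeq : forall y z, y \in M -> z \in M ->
   (#|[set s in S | first_in M s y]| <= #|[set s in S | first_in M s z]|)%N.
  move=> y z yM zM.
  rewrite -(card_imset _ (mulgI (tperm y z))).
  apply: subset_leq_card; apply/subsetP => s' /imsetP[s].
  rewrite inE => /andP[sS fs] ->.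
  by rewrite inE Scl //= first_in_move.
have E : forall y, y \in M ->
   #|[set s in S | first_in M s y]| = #|[set s in S | first_in M s x]|.
  by move=> y yM; apply/eqP; rewrite eqn_leq !cardeq.
rewrite mulnC -sum_nat_const -(eq_bigr _ E).
rewrite -sum1_card.
rewrite (eq_bigr (fun s => \sum_(y in M) (first_in M s y : nat))); last first.
  move=> s sS.
  have [y yM fy] := first_in_ex s xM.
  rewrite (bigD1 y) //= fy big1 // => z /andP[zM nzy].
  by case fz: (first_in M s z) => //; rewrite (first_in_uniq fz fy) eqxx in nzy.
rewrite exchange_big /=; apply: eq_bigr => y yM.
rewrite -sum1_card big_mkcond /= [RHS]big_mkcond /=; apply: eq_bigr => s _.
by rewrite inE; case: (s \in S); case: (first_in M s y).
Qed.


Lemma path_mono_in (T : eqType) (r r' : rel T) x p :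
  path r x p -> (forall a b, a \in x :: p -> b \in x :: p -> r a b -> r' a b) ->
  path r' x p.
Proof.
elim: p x => [|y p IH] x //= /andP[rxy pp] H.
apply/andP; split.
  by apply: H => //; rewrite !inE eqxx ?orbT.
apply: IH => // a b Ha Hb; apply: H; rewrite inE ?Ha ?Hb ?orbT //.
Qed.

Lemma path_prefix (T : eqType) (r : rel T) x p w :
  path r x p -> w \in x :: p ->
  exists q, [/\ path r x q, last x q = w & size q <= size p]%N.
Proof.
elim: p x => [|y p IH] x /=.
  by move=> _; rewrite inE => /eqP ->; exists [::].
move=> /andP[rxy pp]; rewrite inE => /orP[/eqP ->|Hw].
  by exists [::].
have [q [pq lq sq]] := IH y pp Hw.
by exists (y :: q); split => //=; rewrite ?rxy.
Qed.

Lemma first_hit (T : eqType) (r : rel T) (A : pred T) x p :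
  path r x p -> ~~ A x -> has A p ->
  exists q z y, [/\ path r x q, last x q = z, all (predC A) (x :: q),
     r z y & A y] /\ (size q < size p)%N /\ {subset x :: q <= x :: p}.
Proof.
elim: p x => [|a p IH] x //= /andP[rxa pp] nAx hap.
case Aa: (A a).
  exists [::], x, a; split; first by split => //=; rewrite nAx.
  by split => // w; rewrite !inE => ->.
move: hap; rewrite Aa /= => hp.
have [q [z [y [[pq lq aq rzy Ay] [sq sub]]]]] := IH a pp (negbT Aa) hp.
exists (a :: q), z, y; split; first by split => //=; rewrite ?rxa ?nAx.
split; first by [].
move=> w; rewrite inE => /orP[/eqP ->|Hw]; first by rewrite inE eqxx.
by rewrite inE (sub w Hw) orbT.
Qed.

Section Carve.
Variables (T : finType) (e : rel T) (t n : nat).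
Variables (C : 'I_n -> {set T}) (h : 'I_n -> T).

Definition srel (D : {set T}) := fun x y => [&& e x y, x \in D & y \in D].

Definition reach (D : {set T}) (c : T) : {set T} :=
  [set y | `[< exists p, [/\ c \in D, path (srel D) c p, last c p = y & (size p <= t)%N] >]].

Lemma path_in_D (D : {set T}) c p : c \in D -> path (srel D) c p -> forall y, y \in c :: p -> y \in D.
Proof.
elim: p c => [|a p IH] c cD /=; first by move=> _ y; rewrite inE => /eqP ->.
case/andP => /and3P[_ _ aD] pp y; rewrite inE => /orP[/eqP -> //|].
exact: IH.
Qed.

Lemma reach_sub (D : {set T}) c : reach D c \subset D.
Proof.
apply/subsetP => y; rewrite inE => /asboolP[p [cD pp <- _]].
by apply: (path_in_D cD pp); exact: mem_last.
Qed.

Lemma reach_center (D : {set T}) c y : y \in reach D c -> c \in reach D c.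
Proof.
rewrite !inE => /asboolP[p [cD _ _ _]]; apply/asboolP.
by exists [::].
Qed.

Lemma reach_shallow (D : {set T}) c y : y \in reach D c -> t_shallow e t (reach D c).
Proof.
move=> yR; exists c; first exact: reach_center yR.
move=> v; rewrite inE => /asboolP[p [cD pp lp sp]].
have allR : forall w, w \in c :: p -> w \in reach D c.
  move=> w wp; have [q [pq lq sq]] := path_prefix pp wp.
  rewrite inE; apply/asboolP; exists q; split => //.
  exact: leq_trans sq sp.
exists p; split => //.
apply: (path_mono_in pp) => a b ap bp /and3P[eab _ _].
by rewrite eab !allR.
Qed.

Section Order.
Variable s : {perm 'I_n}.

Fixpoint taken (r : nat) : {set T} :=
  if r is r'.+1 then
    taken r' :|: \bigcup_(j | (s j == r' :> nat)) reach (C j :\: taken r') (h j)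
  else set0.

Definition Bc j := reach (C j :\: taken (s j)) (h j).

Lemma Bc_sub j : Bc j \subset C j.
Proof.
apply: subset_trans (reach_sub _ _) _; exact: subsetDl.
Qed.

Lemma Bc_taken j x : x \in Bc j -> x \notin taken (s j).
Proof.
move=> /(subsetP (reach_sub _ _)); by rewrite inE => /andP[].
Qed.

Lemma taken_mono r r' : (r <= r')%N -> taken r \subset taken r'.
Proof.
elim: r' => [|r' IH]; first by rewrite leqn0 => /eqP ->.
rewrite leq_eqVlt => /orP[/eqP -> //|]; rewrite ltnS => /IH H.
apply: subset_trans H _; exact: subsetUl.
Qed.

Lemma Bc_in_taken j r : (s j < r)%N -> Bc j \subset taken r.
Proof.
move=> lt; apply: subset_trans (taken_mono lt); rewrite /=.
apply: subset_trans (subsetUr _ _); rewrite /Bc.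
by apply: (bigcup_sup j); rewrite eqxx.
Qed.

Lemma taken_inv r x : x \in taken r -> exists2 j, (s j < r)%N & x \in Bc j.
Proof.
elim: r => [|r IH] /=; first by rewrite inE.
rewrite inE => /orP[/IH [j jr xj]|]; first by exists j => //; exact: ltnW.
case/bigcupP => j /eqP sj xj; exists j; first by rewrite sj.
by rewrite /Bc sj.
Qed.

Lemma Bc_disj a b : a != b -> [disjoint Bc a & Bc b].
Proof.
wlog lt : a b / (s a < s b)%N.
  move=> W nab; case: (ltngtP (s a) (s b)) => [l|l|E].
  - exact: W.
  - by rewrite disjoint_sym; apply: W; rewrite // eq_sym.
  - by move/val_inj/perm_inj: E => E; rewrite E eqxx in nab.
move=> _; apply/pred0P => x /=; apply/negP => /andP[xa xb].
have := Bc_taken xb; by rewrite (subsetP (Bc_in_taken lt)).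
Qed.


Lemma in_Bc j q : h j \in C j -> path (srel (C j)) (h j) q -> (size q <= t)%N ->
  (forall a, a \in h j :: q -> a \notin taken (s j)) -> last (h j) q \in Bc j.
Proof.
move=> hC pq sq nt; rewrite inE; apply/asboolP; exists q; split => //.
  by rewrite inE hC nt ?mem_head.
apply: (path_mono_in pq) => a b ap bp /and3P[eab aC bC].
by rewrite /srel eab !inE aC bC !nt.
Qed.

Definition kadj a b := [exists y in Bc a, exists z in Bc b, e y z].

Lemma edge_lemma (esym : symmetric e) i j P P' :
  (s i < s j)%N ->
  (forall k, k != i -> k != j -> has (fun x => x \in C k) ((h i :: P) ++ (h j :: P')) ->
     (s j < s k)%N) ->
  h i \in C i -> h j \in C j -> h j \notin C i ->
  path (srel (C i)) (h i) P -> (size P <= t)%N ->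
  path (srel (C j)) (h j) P' -> (size P' <= t)%N ->
  (last (h i) P == last (h j) P') || e (last (h i) P) (last (h j) P') ->
  kadj i j.
Proof.
move=> lij Hk hiC hjC hjnCi pP sP pP' sP' uv.
have nti : forall x, x \in h i :: P -> x \notin taken (s i).
  move=> x xP; apply/negP => /taken_inv [k lk xk].
  have ki : k != i by apply: contraTneq lk => ->; rewrite ltnn.
  have kj : k != j by apply: contraTneq lk => ->; rewrite -leqNgt ltnW.
  have := Hk k ki kj; rewrite has_cat.
  have -> : has (fun x => x \in C k) (h i :: P).
    by apply/hasP; exists x => //; apply: (subsetP (Bc_sub k)).
  move=> /(_ isT) ljk.
  by have := ltn_trans lk (ltn_trans lij ljk); rewrite ltnn.
have ntj : forall x, x \in h j :: P' -> x \in taken (s j) -> x \in Bc i.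
  move=> x xP /taken_inv [k lk xk].
  case: (eqVneq k i) => [<- //|ki].
  have kj : k != j by apply: contraTneq lk => ->; rewrite ltnn.
  have := Hk k ki kj; rewrite has_cat.
  have -> : has (fun x => x \in C k) (h j :: P').
    by apply/hasP; exists x => //; apply: (subsetP (Bc_sub k)).
  rewrite orbT => /(_ isT) ljk.
  by have := ltn_trans lk ljk; rewrite ltnn.
have uB : last (h i) P \in Bc i by apply: in_Bc.
have nA : h j \notin Bc i.
  by apply: contra hjnCi; apply: (subsetP (Bc_sub i)).
case hasB: (has (fun x => x \in Bc i) P').
  have [q [z [y [[pq lq aq rzy Ay] [sq sub]]]]] := first_hit pP' nA hasB.
  have zB : z \in Bc j.
    rewrite -lq; apply: in_Bc => //; first by apply: leq_trans sP'; exact: ltnW.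
    move=> a aq'; apply/negP => /(ntj a (sub a aq')) aB.
    by move: (allP aq a aq') => /negP H; apply: H; exact: aB.
  apply/exists_inP; exists y => //; apply/exists_inP; exists z => //.
  by rewrite esym; case/and3P: rzy.
have notB : forall a, a \in h j :: P' -> a \notin Bc i.
  move=> a; rewrite inE => /orP[/eqP -> //|aP].
  by apply/negP => aB; move/negbT/hasPn: hasB => /(_ a aP); rewrite aB.
have vB : last (h j) P' \in Bc j.
  apply: in_Bc => // a aP; apply/negP => /(ntj a aP) aB.
  by have := notB a aP; rewrite aB.
have vnB := notB _ (mem_last _ _).
apply/exists_inP; exists (last (h i) P) => //; apply/exists_inP; exists (last (h j) P') => //.
case/orP: uv => // /eqP E.
by rewrite -E uB in vnB.
Qed.

Definition Kedges := [set p : 'I_n * 'I_n | (p.1 < p.2)%N && kadj p.1 p.2].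

Lemma nabla_ge0 : (0 <= nabla e t)%R.
Proof.
rewrite /nabla; elim/big_ind: _ => //.
  by move=> x y x0 y0; rewrite le_max x0.
move=> k _; elim/big_ind: _ => //.
  by move=> x y x0 y0; rewrite le_max x0.
move=> B _; elim/big_ind: _ => //.
  by move=> x y x0 y0; rewrite le_max x0.
by move=> Ek _; rewrite divr_ge0.
Qed.

Lemma K_bound (esym : symmetric e) : (#|Kedges|%:R <= nabla e t * n%:R)%R.
Proof.
set A := [set j | Bc j != set0].
set k := #|A|.
have AP : forall j, j \in A -> h j \in Bc j.
  move=> j; rewrite inE => /set0Pn [y yB]; exact: reach_center yB.
pose B' := [ffun a : 'I_k => Bc (enum_val a)].
pose Ek := [set p : 'I_k * 'I_k | (p.1 < p.2)%N &&
                [exists y in B' p.1, exists z in B' p.2, e y z]].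
have SM : shallow_minor e t B' Ek.
  split.
  - move=> a; rewrite ffunE; apply: (@reach_shallow _ _ (h (enum_val a))).
    by apply: AP; exact: enum_valP.
  - move=> a b nab; rewrite !ffunE; apply: Bc_disj.
    by apply: contra nab => /eqP /enum_val_inj ->.
  - move=> p; rewrite inE => /andP[lp /exists_inP[u uB /exists_inP[v vB evu]]].
    by split => //; exists u, v.
have kT : (k < #|T|.+1)%N.
  rewrite ltnS; have -> : k = #|'I_k| by rewrite card_ord.
  apply: (@leq_card _ _ (fun a : 'I_k => h (enum_val a))) => a b /eqP E.
  apply/eqP; apply: contraTT E => nab.
  have := Bc_disj (contra (fun E => introT eqP (enum_val_inj (elimTF eqP E))) nab).
  move=> /pred0P /(_ (h (enum_val a))) /=.
  rewrite AP ?enum_valP //= => /negbT; apply: contra => /eqP ->.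
  by rewrite AP ?enum_valP.
have nab : ((#|Ek|%:R / k%:R) <= nabla e t)%R.
  rewrite /nabla.
  apply: le_trans (le_bigmax _ _ (Ordinal kT)).
  apply: le_trans (le_bigmax _ _ B').
  apply: le_trans (le_bigmax_cond _ _ _); last by apply/asboolP; exact: SM.
  by [].
have KE : (#|Kedges| <= #|Ek|)%N.
  pose f (p : 'I_k * 'I_k) := let a := enum_val p.1 in let b := enum_val p.2 in
     if (a < b)%N then (a, b) else (b, a).
  apply: leq_trans (leq_imset_card f Ek).
  apply: subset_leq_card; apply/subsetP => q; rewrite inE => /andP[lq].
  case/exists_inP => y yB /exists_inP[z zB eyz].
  have q1A : q.1 \in A by rewrite inE; apply/set0Pn; exists y.
  have q2A : q.2 \in A by rewrite inE; apply/set0Pn; exists z.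
  set ra := enum_rank_in q1A q.1; set rb := enum_rank_in q1A q.2.
  have Ea : enum_val ra = q.1 by rewrite /ra enum_rankK_in.
  have Eb : enum_val rb = q.2 by rewrite /rb enum_rankK_in.
  case: (ltngtP ra rb) => [lab|lba|Eab].
  - apply/imsetP; exists (ra, rb); last by rewrite /f /= Ea Eb lq; case: q {lq yB zB q1A q2A ra rb Ea Eb lab}.
    rewrite inE /= lab /=; apply/exists_inP; exists y; first by rewrite ffunE Ea.
    by apply/exists_inP; exists z; rewrite ?ffunE ?Eb.
  - apply/imsetP; exists (rb, ra); last first.
      by rewrite /f /= Ea Eb ltnNge ltnW //=; case: q {lq yB zB q1A q2A ra rb Ea Eb lba}.
    rewrite inE /= lba /=; apply/exists_inP; exists z; first by rewrite ffunE Eb.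
    by apply/exists_inP; exists y; rewrite ?ffunE ?Ea // esym.
  - have : q.1 = q.2 by rewrite -Ea -Eb (val_inj Eab).
    by move=> E; rewrite E ltnn in lq.
have kn : (k <= n)%N by rewrite -[n]card_ord; exact: max_card.
case: (posnP k) => [k0|kpos].
  have -> : #|Kedges| = 0%N.
    apply/eqP; rewrite -leqn0; apply: leq_trans KE _.
    apply: leq_trans (max_card _) _.
    by rewrite card_prod card_ord k0.
  by rewrite mulr_ge0 ?nabla_ge0.
apply: le_trans (_ : (#|Ek|%:R <= nabla e t * n%:R)%R).
  by rewrite ler_nat.
apply: le_trans (_ : (nabla e t * k%:R <= _)%R); last first.
  by rewrite ler_wpM2l ?nabla_ge0 // ler_nat.
by rewrite -ler_pdivrMr ?ltr0n.
Qed.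

End Order.
End Carve.


Lemma card_idx (T : finType) (F : seq {set T}) (P : pred {set T}) :
  #|[set k : 'I_(size F) | P (nth set0 F k)]| = count P F.
Proof.
rewrite -sum1_card -sum1_count (big_nth set0) big_mkord.
by apply: eq_bigl => k; rewrite inE.
Qed.

Lemma first_in_fix n (M : {set 'I_n}) s x a b :
  a \in M -> b \in M -> a != x -> b != x ->
  first_in M s x -> first_in M (tperm a b * s)%g x.
Proof.
move=> aM bM ax bx /andP[xM /forall_inP H]; rewrite /first_in xM /=.
apply/forall_inP => k kM; apply/implyP => nkx.
rewrite !permM (tpermD ax bx).
case: tpermP => [E|E|nka nkb].
- by apply: (implyP (H b bM)).
- by apply: (implyP (H a aM)).
- by apply: (implyP (H k kM)).
Qed.

Lemma kadj_sym (T : finType) (e : rel T) t n C h s a b :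
  symmetric e -> @kadj T e t n C h s a b -> kadj e t C h s b a.
Proof.
move=> esym /exists_inP[y yB /exists_inP[z zB eyz]].
by apply/exists_inP; exists z => //; apply/exists_inP; exists y; rewrite // esym.
Qed.

Section Main.
Variables (T : finType) (e : rel T) (esym : symmetric e) (kappa t : nat).
Variables (F : seq {set T}) (h : 'I_(size F) -> T).
Local Notation n := (size F).
Local Notation C := (fun i : 'I_n => nth set0 F i).
Hypothesis hP : forall i : 'I_n, h i \in C i /\ forall v, v \in C i ->
  exists p, [/\ path (srel e (C i)) (h i) p, last (h i) p = v & (size p <= t)%N].
Hypothesis Hk : forall v : T, (count (fun C : {set T} => v \in C) F <= kappa)%N.

Lemma N_bound (L : seq T) :
  (#|[set k : 'I_n | has (fun x => x \in C k) L]| <= size L * kappa)%N.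
Proof.
elim: L => [|x L IH].
  by rewrite leqn0 cards_eq0; apply/eqP/setP => k; rewrite !inE.
apply: leq_trans (_ : #|[set k : 'I_n | x \in C k] :|: [set k : 'I_n | has (fun x => x \in C k) L]| <= _)%N.
  by apply: subset_leq_card; apply/subsetP => k; rewrite !inE.
rewrite cardsU /= mulSn; apply: leq_trans (leq_subr _ _) _.
by rewrite leq_add // (card_idx F (fun S => x \in S)).
Qed.

Definition Cen := [set p : 'I_n * 'I_n | (p.1 < p.2)%N && ((h p.2 \in C p.1) || (h p.1 \in C p.2))].

Lemma Cen_bound : (#|Cen| <= n * kappa)%N.
Proof.
pose D := [set p : 'I_n * 'I_n | h p.2 \in C p.1].
pose f (p : 'I_n * 'I_n) := if (p.1 < p.2)%N then p else (p.2, p.1).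
apply: leq_trans (_ : #|D| <= _)%N.
  apply: leq_trans (leq_imset_card f D).
  apply: subset_leq_card; apply/subsetP => q; rewrite inE => /andP[lq /orP[H|H]].
    by apply/imsetP; exists q; rewrite ?inE // /f lq.
  apply/imsetP; exists (q.2, q.1); first by rewrite inE.
  by rewrite /f /= ltnNge ltnW //=; case: q lq H.
rewrite -sum1_card.
rewrite (eq_bigl (fun p : 'I_n * 'I_n => xpredT p.1 && (h p.2 \in C p.1))); last first.
  by move=> p; rewrite inE.
rewrite -(pair_big_dep xpredT (fun a b => h b \in C a) (fun _ _ => 1%N)) /=.
under eq_bigr do rewrite big_mkcond /=.
rewrite exchange_big /=.
apply: leq_trans (_ : \sum_(b < n) kappa <= _)%N; last by rewrite sum_nat_const card_ord.
apply: leq_sum => b _; rewrite -big_mkcond /= sum1_card.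
have -> : #|(fun a : 'I_n => h b \in C a)| = #|[set a : 'I_n | h b \in C a]|.
  by apply: eq_card => a; rewrite inE.
by rewrite (card_idx F (fun S => h b \in S)).
Qed.

Lemma first_two_card (N : {set 'I_n}) i j : i \in N -> j \in N -> i != j ->
  (#|[set s | first_in N s i && first_in (N :\ i) s j]| * (#|N :\ i| * #|N|)
     = #|[set: {perm 'I_n}]|)%N.
Proof.
move=> iN jN nij.
have H1 := @count_first n [set: {perm 'I_n}] N i iN (fun s a b _ _ _ => in_setT _).
set Si := [set s in [set: {perm 'I_n}] | first_in N s i] in H1.
have jNi : j \in N :\ i by rewrite !inE eq_sym nij.
have H2 := @count_first n Si (N :\ i) j jNi.
rewrite -H1 -H2; last first.
  move=> s a b; rewrite !inE => /andP[_ fs] /andP[ai aN] /andP[bi bN].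
  by apply: first_in_fix.
rewrite mulnA; congr (_ * _ * _)%N; apply: eq_card => s; rewrite !inE.
by [].
Qed.

Lemma edge_count p : p \in packing_graph_edges e F :\: Cen ->
  (2 * #|[set: {perm 'I_n}]| <= #|[set s | p \in Kedges e t C h s]| * (2 * kappa * t.+1) ^ 2)%N.
Proof.
case: p => i j; rewrite !inE /= negb_and negb_or.
move=> /andP[/orP[/negPn lij0|/andP[hjCi hiCj]] /andP[lij /exists_inP[u uC /exists_inP[v vC uv]]]].
  by rewrite lij in lij0.
have [hiC /(_ u uC) [P [pP lP sP]]] := hP i.
have [hjC /(_ v vC) [P' [pP' lP' sP']]] := hP j.
have nij : i != j by apply: contraTneq lij => ->; rewrite ltnn.
set L := (h i :: P) ++ (h j :: P').
set N := [set k : 'I_n | has (fun x => x \in C k) L].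
have iN : i \in N by rewrite inE has_cat /= hiC.
have jN : j \in N by rewrite inE has_cat /= hjC orbT.
set E1 := [set s | first_in N s i && first_in (N :\ i) s j].
set E2 := [set s | first_in N s j && first_in (N :\ j) s i].
have c1 := first_two_card iN jN nij.
have nji : j != i by rewrite eq_sym.
have c2 := first_two_card jN iN nji.
have uv' : (last (h i) P == last (h j) P') || e (last (h i) P) (last (h j) P').
  by rewrite lP lP'.
have S1 : E1 \subset [set s | (i, j) \in Kedges e t C h s].
  apply/subsetP => s; rewrite !inE /= lij /= => /andP[/andP[_ /forall_inP fi] /andP[_ /forall_inP fj]].
  have lsij : (s i < s j)%N by apply: (implyP (fi j jN)); rewrite eq_sym.
  apply: (@edge_lemma T e t n C h s esym i j P P') => //.
  move=> k ki kj hk; apply: (implyP (fj k _)) => //.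
  by rewrite !inE ki.
have S2 : E2 \subset [set s | (i, j) \in Kedges e t C h s].
  apply/subsetP => s; rewrite !inE /= lij /= => /andP[/andP[_ /forall_inP fi] /andP[_ /forall_inP fj]].
  have lsji : (s j < s i)%N by apply: (implyP (fi i iN)).
  apply: kadj_sym => //.
  apply: (@edge_lemma T e t n C h s esym j i P' P) => //.
  - move=> k kj ki hk; apply: (implyP (fj k _)) => //.
    by move: hk; rewrite !inE kj /L !has_cat orbC.
  - by rewrite eq_sym esym.
have D12 : [disjoint E1 & E2].
  apply/pred0P => s /=; apply/negP => /andP[].
  rewrite !inE => /andP[/andP[_ /forall_inP fi] _] /andP[/andP[_ /forall_inP fj] _].
  have l1 : (s i < s j)%N by apply: (implyP (fi j jN)); rewrite eq_sym.
  have l2 : (s j < s i)%N by apply: (implyP (fj i iN)).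
  by have := ltn_trans l1 l2; rewrite ltnn.
have KE : (#|E1| + #|E2| <= #|[set s | (i, j) \in Kedges e t C h s]|)%N.
  have := cardsU E1 E2; rewrite (disjoint_setI0 D12) cards0 subn0 => <-.
  by apply: subset_leq_card; rewrite subUset S1 S2.
have NL : (#|N| <= 2 * kappa * t.+1)%N.
  apply: leq_trans (N_bound L) _.
  rewrite mulnAC leq_mul2r; apply/orP; right.
  rewrite /L size_cat; change (size (h i :: P)) with (size P).+1; change (size (h j :: P')) with (size P').+1.
  by rewrite mul2n -addnn !addSn !addnS !ltnS leq_add.
have Ni : #|N :\ i| = #|N|.-1 by rewrite (cardsD1 i N) iN.
have Nj : #|N :\ j| = #|N|.-1 by rewrite (cardsD1 j N) jN.
rewrite mul2n -addnn -{1}c1 -c2 Ni Nj -mulnDl.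
apply: leq_mul => //.
rewrite expnS expn1; apply: leq_mul => //.
by apply: leq_trans (leq_pred _) NL.
Qed.

Lemma sum_K_bound :
  (\sum_(p in packing_graph_edges e F :\: Cen) #|[set s | p \in Kedges e t C h s]|
     <= \sum_(s : {perm 'I_n}) #|Kedges e t C h s|)%N.
Proof.
set Nc := packing_graph_edges e F :\: Cen.
have E : forall p, #|[set s | p \in Kedges e t C h s]| = (\sum_(s : {perm 'I_n}) (p \in Kedges e t C h s : nat))%N.
  move=> p; rewrite -sum1_card big_mkcond /=; apply: eq_bigr => s _.
  by rewrite inE; case: (p \in _).
rewrite (eq_bigr _ (fun p _ => E p)) exchange_big /=.
apply: leq_sum => s _.
rewrite -sum1_card [X in (_ <= X)%N]big_mkcond [X in (X <= _)%N]big_mkcond /=.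
apply: leq_sum => p _.
by case: (p \in Nc); case: (p \in Kedges _ _ _ _ _).
Qed.

Lemma Nc_bound :
  ((#|packing_graph_edges e F :\: Cen|)%:R * 2 <=
     ((2 * kappa * t.+1) ^ 2)%:R * (nabla e t * n%:R) :> rat)%R.
Proof.
set Nc := packing_graph_edges e F :\: Cen.
set Q := ((2 * kappa * t.+1) ^ 2)%N.
set Pm := #|[set: {perm 'I_n}]|.
have Pm0 : (0 < Pm)%N by apply/card_gt0P; exists 1%g; rewrite inE.
have S1 : (#|Nc| * (2 * Pm) <= (\sum_(s : {perm 'I_n}) #|Kedges e t C h s|) * Q)%N.
  apply: leq_trans (_ : (\sum_(p in Nc) #|[set s | p \in Kedges e t C h s]|) * Q <= _)%N; last first.
    by rewrite leq_mul2r sum_K_bound orbT.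
  rewrite -sum_nat_const big_distrl /=; apply: leq_sum => p pN.
  exact: edge_count.
have S2 : ((\sum_(s : {perm 'I_n}) #|Kedges e t C h s|)%:R <= Pm%:R * (nabla e t * n%:R) :> rat)%R.
  rewrite natr_sum; apply: le_trans (_ : \sum_(s : {perm 'I_n}) (nabla e t * n%:R) <= _)%R.
    by apply: ler_sum => s _; apply: K_bound.
  by rewrite sumr_const mulr_natl /Pm cardsT.
have S1' : ((#|Nc|%:R * 2) * Pm%:R <= (Q%:R * (nabla e t * n%:R)) * Pm%:R :> rat)%R.
  apply: le_trans (_ : (\sum_(s : {perm 'I_n}) #|Kedges e t C h s|)%:R * Q%:R <= _)%R.
    by rewrite -!natrM ler_nat -mulnA.
  apply: le_trans (ler_wpM2r (ler0n _ Q) S2) _; rewrite le_eqVlt; apply/orP; left; apply/eqP; ring.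
by rewrite ler_pM2r ?ltr0n in S1'.
Qed.

End Main.

Unset Implicit Arguments.
Local Open Scope ring_scope.

Theorem mainTheorem6 (T : finType) (e : rel T)
    (e_sym : symmetric e) (e_irr : irreflexive e)
    (kappa t : nat) (F : seq {set T}) (HF : packing e kappa t F) :
  (#|packing_graph_edges e F|)%:R / (size F)%:R
    <= 2 * (t.+1)%:R ^+ 2 * kappa%:R ^+ 2 * nabla e t + kappa%:R :> rat.
Proof.
case: HF => Hsh Hk.
have : forall i : 'I_(size F), exists c, c \in nth set0 F i /\ forall v, v \in nth set0 F i ->
  exists p, [/\ path (srel e (nth set0 F i)) c p, last c p = v & (size p <= t)%N].
  by move=> i; case: (Hsh _ (mem_nth set0 (ltn_ord i))) => c cC H; exists c.
case/choice => h hP.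
have NcB := Nc_bound e_sym hP Hk.
have CB := Cen_bound h Hk.
set H := packing_graph_edges e F in NcB *.
set Ce := Cen h in NcB CB.
have HB : (#|H| <= #|H :\: Ce| + size F * kappa)%N.
  rewrite -(cardsID Ce H) addnC leq_add2l.
  by apply: leq_trans CB; apply: subset_leq_card; exact: subsetIr.
have ge0 : 0 <= 2 * (t.+1)%:R ^+ 2 * kappa%:R ^+ 2 * nabla e t + kappa%:R :> rat.
  apply: addr_ge0 => //; apply: mulr_ge0 (nabla_ge0 e t); by rewrite !mulr_ge0 ?exprn_ge0.
case: (posnP (size F)) => [n0|npos].
  by rewrite [X in X%:R^-1]n0 invr0 mulr0.
rewrite ler_pdivrMr ?ltr0n //.
have HB' : (#|H|%:R <= (#|H :\: Ce|)%:R + (size F)%:R * kappa%:R :> rat).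
  by rewrite -natrM -natrD ler_nat.
have nn := nabla_ge0 e t.
set N := nabla e t in NcB nn ge0 *.
have X : (#|H :\: Ce|)%:R <= 2 * (t.+1)%:R ^+ 2 * kappa%:R ^+ 2 * N * (size F)%:R :> rat.
  rewrite -(ler_pM2r (_ : (0 : rat) < 2)) //.
  apply: le_trans NcB _; rewrite le_eqVlt; apply/orP; left; apply/eqP.
  rewrite natrX !natrM; ring.
apply: le_trans HB' _.
rewrite mulrDl; apply: lerD => //.
by rewrite mulrC.
Qed.
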